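(* Let $\alpha_1,\dots,\alpha_m\in\mathbb C$ be distinct. For $i=1,\dots,n$ define the $B_n$-valued functions $$A_i=\sum_{k=1}^m\frac{Y_{i,k}}{z_i-\alpha_k}-\sum_{p\ne i}\frac{\nu s_{ip}}{z_i-z_p}.$$ Then the connection $\nabla$ on the trivial bundle with fiber $B_n$ given by the KZ system $\partial F/\partial z_i=A_iF$ ($i=1,\dots,n$) is flat, i.e. $\partial_iA_j-\partial_jA_i+[A_i,A_j]=0$ for all $i,j$.
   Context: $D$ is a star-shaped graph with $m$ legs, $d_k$ vertices in the $k$-th leg (including the node). $B_n$ is the $\mathbb C[\gamma,\nu]$-algebra ($\gamma=(\gamma_{kj})$) generated by $S_n$ (transpositions $s_{ij}$) and $Y_{i,k}$ ($1\le i\le n$, $1\le k\le m$) with relations, for $i\ne j$: $s_{ij}Y_{i,k}=Y_{j,k}s_{ij}$; $s_{ij}Y_{h,k}=Y_{h,k}s_{ij}$ for $h\ne i,j$; $\prod_{j=1}^{d_k}(Y_{i,k}-\gamma_{kj})=0$; $\sum_kY_{i,k}=\nu\sum_{j\ne i}s_{ij}$; $[Y_{i,k},Y_{j,k}]=\nu(Y_{i,k}-Y_{j,k})s_{ij}$; $[Y_{i,k},Y_{j,l}]=0$ for $k\ne l$. The functions $A_i$ are defined on the complement in $\mathbb C^n$ of the hyperplanes $z_i=z_p$ and $z_i=\alpha_k$. *)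

(* Defs.v *)
From HB Require Import structures.
From mathcomp Require Import all_boot all_order all_algebra all_fingroup.
From mathcomp Require Import complex.
From mathcomp Require Import all_classical all_reals all_analysis.
Set Implicit Arguments. Unset Strict Implicit. Unset Printing Implicit Defensive.
Import Order.TTheory GRing.Theory Num.Theory.
Import numFieldNormedType.Exports.
Local Open Scope ring_scope.
Local Open Scope complex_scope.

Definition updz (C : Type) (n : nat) (z : 'I_n -> C) (i : 'I_n) (w : C) : 'I_n -> C :=
  fun p => if p == i then w else z p.

Definition Cplx (R : realType) : numClosedFieldType := R[i].

Section PDeriv.
Variable R : realType.
Local Notation C := (Cplx R).
Variable n : nat.

Definition pderivable (f : ('I_n -> C) -> C) (i : 'I_n) (z : 'I_n -> C) : Prop :=
  derivable (fun w : C => f (updz z i w)) (z i) 1.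

Definition pderiv (f : ('I_n -> C) -> C) (i : 'I_n) (z : 'I_n -> C) : C :=
  derive1 (fun w : C => f (updz z i w)) (z i).

(* For a C-module V (possibly infinite dimensional), G : C^n -> V is the
   partial derivative d/dz_i of F : C^n -> V on the (open) set U: on U,
   F is a finite C-linear combination sum_c f_c(z) b_c of fixed vectors b_c
   with coefficients f_c differentiable in z_i, and G = sum_c (d f_c/dz_i) b_c. *)
Definition is_pderiv (V : lmodType C) (U : set ('I_n -> C)) (i : 'I_n)
    (F G : ('I_n -> C) -> V) : Prop :=
  exists (N : nat) (f : 'I_N -> ('I_n -> C) -> C) (b : 'I_N -> V),
    forall z, U z ->
      [/\ forall c, pderivable (f c) i z,
          F z = \sum_(c < N) f c z *: b c
        & G z = \sum_(c < N) pderiv (f c) i z *: b c].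
End PDeriv.

(* Main.v *)
Require Import Defs.
From HB Require Import structures.
From mathcomp Require Import all_boot all_order all_algebra all_fingroup.
From mathcomp Require Import complex.
From mathcomp Require Import all_classical all_reals all_analysis.
From mathcomp Require Import ring.
Import Order.TTheory GRing.Theory Num.Theory.
Import numFieldNormedType.Exports.
Local Open Scope ring_scope.
Local Open Scope complex_scope.

Section Perms.
Variable n : nat.

Ltac simpl_neq := rewrite ?eqxx /=; repeat (match goal with
  | H : is_true (?a != ?b) |- context [?a == ?b] => rewrite (negbTE H)
  | H : is_true (?a != ?b) |- context [?b == ?a] => rewrite eq_sym (negbTE H)
  end; rewrite ?eqxx /=).

Ltac tpsolve i j k :=
  apply/permP; let x := fresh "x" in intro x; rewrite !permM !permE /=;
  case: (eqVneq x i) => [?|?]; [subst; simpl_neq; done|];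
  case: (eqVneq x j) => [?|?]; [subst; simpl_neq; done|];
  case: (eqVneq x k) => [?|?]; [subst|]; simpl_neq; done.

Lemma tp_a (i j k : 'I_n) : i != j -> j != k -> i != k ->
  (tperm i k * tperm i j = tperm i j * tperm j k)%g.
Proof. move=> ij jk ik. tpsolve i j k. Qed.
Lemma tp_b (i j k : 'I_n) : i != j -> j != k -> i != k ->
  (tperm i j * tperm i k = tperm j k * tperm i j)%g.
Proof. move=> ij jk ik. tpsolve i j k. Qed.
Lemma tp_c (i j k : 'I_n) : i != j -> j != k -> i != k ->
  (tperm i k * tperm j k = tperm j k * tperm i j)%g.
Proof. move=> ij jk ik. tpsolve i j k. Qed.
Lemma tp_d (i j k : 'I_n) : i != j -> j != k -> i != k ->
  (tperm j k * tperm i k = tperm i j * tperm j k)%g.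
Proof. move=> ij jk ik. tpsolve i j k. Qed.
Lemma tp_disj (a b c d : 'I_n) : a != c -> a != d -> b != c -> b != d ->
  (tperm a b * tperm c d = tperm c d * tperm a b)%g.
Proof. move=> ac ad bc bd.
apply/permP => x; rewrite !permM !permE /=.
case: (eqVneq x a) => [?|?]; [subst; simpl_neq; done|].
case: (eqVneq x b) => [?|?]; [subst; simpl_neq; done|].
case: (eqVneq x c) => [?|?]; [subst; simpl_neq; done|].
case: (eqVneq x d) => [?|?]; [subst|]; simpl_neq; done.
Qed.
End Perms.
Arguments tp_a {n i j k}.
Arguments tp_b {n i j k}.
Arguments tp_c {n i j k}.
Arguments tp_d {n i j k}.
Arguments tp_disj {n a b c d}.


Section Alg.
Variable R : realType.
Local Notation C := (Cplx R).
Variables (B : algType C) (n m : nat) (nu : B) (sigma : {perm 'I_n} -> B)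
  (Y : 'I_n -> 'I_m -> B).
Hypothesis nuC : forall x : B, nu * x = x * nu.
Hypothesis sigM : forall p q : {perm 'I_n}, sigma (p * q)%g = sigma p * sigma q.
Hypothesis H1 : forall (i j : 'I_n) k, i != j ->
     sigma (tperm i j) * Y i k = Y j k * sigma (tperm i j).
Hypothesis H2 : forall (i j h : 'I_n) k, i != j -> h != i -> h != j ->
     sigma (tperm i j) * Y h k = Y h k * sigma (tperm i j).
Hypothesis H3 : forall (i j : 'I_n) k, i != j ->
     Y i k * Y j k - Y j k * Y i k = nu * (Y i k - Y j k) * sigma (tperm i j).
Hypothesis H4 : forall (i j : 'I_n) (k l : 'I_m), i != j -> k != l ->
     Y i k * Y j l = Y j l * Y i k.

Definition br (x y : B) := x * y - y * x.

Lemma br_suml (I : Type) (r : seq I) (P : pred I) (F : I -> B) y :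
  br (\sum_(i <- r | P i) F i) y = \sum_(i <- r | P i) br (F i) y.
Proof. by rewrite /br mulr_suml mulr_sumr -sumrB. Qed.
Lemma br_sumr (I : Type) (r : seq I) (P : pred I) (F : I -> B) y :
  br y (\sum_(i <- r | P i) F i) = \sum_(i <- r | P i) br y (F i).
Proof. by rewrite /br mulr_suml mulr_sumr -sumrB. Qed.
Lemma brZl (a : C) x y : br (a *: x) y = a *: br x y.
Proof. by rewrite /br -scalerAl -scalerAr scalerBr. Qed.
Lemma brZr (a : C) x y : br x (a *: y) = a *: br x y.
Proof. by rewrite /br -scalerAl -scalerAr scalerBr. Qed.
Lemma brDl x y t : br (x + y) t = br x t + br y t.
Proof. by rewrite /br mulrDl mulrDr opprD addrACA. Qed.
Lemma brDr x y t : br t (x + y) = br t x + br t y.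
Proof. by rewrite /br mulrDl mulrDr opprD addrACA. Qed.
Lemma brNl x y : br (- x) y = - br x y.
Proof. by rewrite /br mulNr mulrN opprK opprB; exact: addrC. Qed.
Lemma brNr x y : br x (- y) = - br x y.
Proof. by rewrite /br mulNr mulrN opprK opprB; exact: addrC. Qed.
Lemma brxx x : br x x = 0.
Proof. by rewrite /br subrr. Qed.
Lemma br_nu x y : br (nu * x) (nu * y) = nu * nu * br x y.
Proof.
rewrite /br mulrBr !mulrA; congr (_ - _).
  by rewrite -[nu * x * nu]mulrA -nuC mulrA.
by rewrite -[nu * y * nu]mulrA -nuC mulrA.
Qed.
Lemma br_nur x y : br x (nu * y) = nu * br x y.
Proof. by rewrite /br mulrBr !mulrA -(nuC x). Qed.
Lemma br_nul x y : br (nu * x) y = nu * br x y.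
Proof. by rewrite /br mulrBr !mulrA -(nuC y). Qed.

Local Notation s i p := (sigma (tperm i p)).

Variables (z : 'I_n -> C) (alpha : 'I_m -> C).
Hypothesis zd : forall i p : 'I_n, i != p -> z i != z p.
Hypothesis za : forall (i : 'I_n) (k : 'I_m), z i != alpha k.

Let a i k := (z i - alpha k)^-1.
Let w i p := (z i - z p)^-1.
Let P i := \sum_(k < m) a i k *: Y i k.
Let Q i := \sum_(p < n | p != i) w i p *: (nu * s i p).

Lemma brPP i j : i != j ->
  br (P i) (P j) = \sum_k (a i k * a j k) *: (nu * (Y i k - Y j k) * s i j).
Proof.
move=> ij; rewrite /P br_suml; apply: eq_bigr => k _.
rewrite br_sumr (bigD1 k) //= big1 ?addr0.
  by rewrite brZl brZr scalerA /br H3.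
move=> l lk; have kl : k != l by rewrite eq_sym.
by rewrite brZl brZr /br (H4 _ _ _ _ ij kl) subrr !scaler0.
Qed.

Lemma brPQ i j : i != j ->
  br (P i) (Q j) = \sum_k (a i k * w j i) *: (nu * (Y i k - Y j k) * s i j).
Proof.
move=> ij; rewrite /P /Q br_suml; apply: eq_bigr => k _.
rewrite br_sumr (bigD1 i ij) /= big1 ?addr0.
  rewrite brZl brZr scalerA br_nur tpermC; congr (_ *: _).
  by rewrite /br H1 // -mulrBl mulrA.
move=> q /andP [qj qi].
have jq : j != q by rewrite eq_sym.
have iq : i != q by rewrite eq_sym.
by rewrite brZl brZr br_nur /br (H2 _ _ _ _ jq ij iq) subrr mulr0 !scaler0.
Qed.

Lemma brQP i j : i != j ->
  br (Q i) (P j) = \sum_k (w i j * a j k) *: (nu * (Y i k - Y j k) * s i j).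
Proof.
move=> ij; have ji : j != i by rewrite eq_sym.
rewrite /Q br_suml (bigD1 j ji) /=.
rewrite [X in _ + X](_ : _ = 0) ?addr0; last first.
  apply: big1 => p /andP [pi pj]; rewrite /P br_sumr big1 // => k _.
  have ip : i != p by rewrite eq_sym.
  have jp : j != p by rewrite eq_sym.
  by rewrite brZl brZr br_nul /br (H2 _ _ _ _ ip ji jp) subrr mulr0 !scaler0.
rewrite /P brZl br_nul br_sumr mulr_sumr scaler_sumr; apply: eq_bigr => k _.
rewrite brZr -scalerAr scalerA; congr (_ *: _).
by rewrite /br {1}tpermC (H1 _ _ _ ji) (tpermC j i) -mulrBl mulrA.
Qed.
Lemma wsub i p : i != p -> z i - z p != 0.
Proof. by move=> ip; rewrite subr_eq0 zd. Qed.
Arguments wsub {i p}.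

Lemma coefQ i j k : i != j -> k != i -> k != j ->
  w i j * w j k + (w i k * w j i - w i k * w j k) = 0.
Proof.
move=> ij ki kj.
have h1 := wsub ij. have h2 := wsub (ki : k != i).
have ji : j != i by rewrite eq_sym.
have ik : i != k by rewrite eq_sym.
have jk : j != k by rewrite eq_sym.
have h3 := wsub ji. have h4 := wsub ik. have h5 := wsub jk.
rewrite /w; field.
by rewrite h1 h3 h4 h5.
Qed.

Arguments coefQ {i j k}.

Lemma brQQ i j : i != j -> br (Q i) (Q j) = 0.
Proof.
move=> ij; have ji : j != i by rewrite eq_sym.
pose T p q := (w i p * w j q) *: (nu * nu * br (s i p) (s j q)).
have E : forall p, br (w i p *: (nu * s i p)) (Q j) = \sum_(q < n | q != j) T p q.
  move=> p; rewrite /Q br_sumr; apply: eq_bigr => q _.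
  by rewrite brZl brZr scalerA br_nu.
rewrite /Q br_suml (eq_bigr _ (fun p _ => E p)) (bigD1 j ji) /=.
have Ej : \sum_(q < n | q != j) T j q = \sum_(q < n | (q != i) && (q != j)) T j q.
  rewrite (bigD1 i ij) /= {1}/T (tpermC j i) brxx mulr0 scaler0 add0r.
  by apply: eq_bigl => q; rewrite andbC.
have Ep : forall p, (p != i) && (p != j) ->
    \sum_(q < n | q != j) T p q = T p i + T p p.
  move=> p /andP [pi pj].
  rewrite (bigD1 i ij) /= (bigD1 p) /=; last by rewrite pj pi.
  rewrite big1 ?addr0 // => q /andP [/andP [qj qi] qp].
  have ip : i != p by rewrite eq_sym.
  have iq : i != q by rewrite eq_sym.
  have pq : p != q by rewrite eq_sym.
  by rewrite /T /br -!sigM (tp_disj ij iq pj pq) subrr mulr0 scaler0.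
rewrite Ej (eq_bigr _ Ep) -big_split /=; apply: big1 => k /andP [ki kj].
have ik : i != k by rewrite eq_sym.
have jk : j != k by rewrite eq_sym.
rewrite /T /br -!sigM (tpermC j i) (tp_a ij jk ik) (tp_b ij jk ik) (tp_c ij jk ik) (tp_d ij jk ik).
set c := sigma _; set c' := sigma _.
have -> : c' - c = - (c - c') by rewrite opprB.
rewrite mulrN scalerN -scalerBl -scalerDl (coefQ ij ki kj) scale0r //.
Qed.
Lemma asub i k : z i - alpha k != 0.
Proof. by rewrite subr_eq0 za. Qed.

Lemma commA i j : i != j ->
  (P i - Q i) * (P j - Q j) - (P j - Q j) * (P i - Q i) = 0.
Proof.
move=> ij; have ji : j != i by rewrite eq_sym.
rewrite -/(br _ _) brDl !brDr !brNl !brNr (brPP i j ij) (brPQ i j ij) (brQP i j ij) (brQQ i j ij).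
rewrite opprK addr0 -!sumrN -!big_split /=; apply: big1 => k _.
rewrite -!scalerBl.
have -> : a i k * a j k + - (a i k * w j i) + - (w i j * a j k) = 0.
  have h1 := wsub ij. have h2 := wsub ji.
  have h3 := asub i k. have h4 := asub j k.
  rewrite /a /w; field.
  by rewrite h1 h2 h3 h4.
by rewrite scale0r.
Qed.
End Alg.

Section Uniq.
Variable R : realType.
Local Notation C := (Cplx R).
Variable V : lmodType C.

Lemma lin_elim N (e : 'I_N.+1 -> V) (a : 'I_N.+1 -> C) :
  \sum_c a c *: e c = 0 -> a ord_max != 0 -> forall x : 'I_N.+1 -> C,
  \sum_c x c *: e c = \sum_(c < N) (x (widen_ord (leqnSn N) c)
     - x ord_max * (a (widen_ord (leqnSn N) c) / a ord_max)) *: e (widen_ord (leqnSn N) c).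
Proof.
move=> rel a0 x.
have He : e ord_max = - \sum_(c < N) (a (widen_ord (leqnSn N) c) / a ord_max) *: e (widen_ord (leqnSn N) c).
  move: rel; rewrite big_ord_recr /= => /eqP; rewrite addrC addr_eq0 => /eqP h.
  rewrite -[e ord_max]scale1r -(mulVf a0) -scalerA h scalerN scaler_sumr; congr (- _).
  by apply: eq_bigr => c _; rewrite scalerA mulrC.
rewrite big_ord_recr /= He scalerN scaler_sumr -sumrN -big_split /=.
by apply: eq_bigr => c _; rewrite scalerA scalerBl.
Qed.

Arguments lin_elim {N e a}.

Lemma dlin (f1 f2 : C -> C) (k x : C) : derivable f1 x 1 -> derivable f2 x 1 ->
  derivable (fun w => f1 w - f2 w * k) x 1 /\
  'D_1 (fun w => f1 w - f2 w * k) x = 'D_1 f1 x - 'D_1 f2 x * k.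
Proof.
move=> d1 d2.
have -> : (fun w => f1 w - f2 w * k) = f1 - (f2 * cst k).
  by apply/funext => w.
have d3 := (@derivableM C C f2 (cst k) x 1 d2 (derivable_cst _ _ _)).
split; first exact: (@derivableB C C C f1 (f2 * cst k) x 1 d1 d3).
rewrite (@deriveB C C C f1 (f2 * cst k) x 1 d1 d3).
rewrite (@deriveM C C f2 (cst k) x 1 d2 (derivable_cst _ _ _)).
rewrite (@derive_cst C C C k x 1) scaler0 add0r /= mulrC.
by [].
Qed.

Lemma uniq1 N : forall (e : 'I_N -> V) (h : 'I_N -> C -> C) (w0 : C),
  (forall c, derivable (h c) w0 1) ->
  (\forall w \near w0, \sum_c h c w *: e c = 0) ->
  \sum_c derive1 (h c) w0 *: e c = 0.
Proof.
elim: N => [|N IH] e h w0 dh H0; first by rewrite big_ord0.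
have [[a [rel [c0 ac0]]]|free] := pselect (exists a : 'I_N.+1 -> C,
   \sum_c a c *: e c = 0 /\ exists c0, a c0 != 0); last first.
  have fr : forall a : 'I_N.+1 -> C, \sum_c a c *: e c = 0 -> forall c, a c = 0.
    move=> a ha c; apply/eqP/negP => /negP hc; apply: free.
    by exists a; split => //; exists c.
  apply: big1 => c _.
  suff -> : derive1 (h c) w0 = 0 by rewrite scale0r.
  rewrite derive1E (@near_eq_derive C C C (h c) (cst 0) w0 1) ?(@derive_cst C C C 0 w0 1) //.
  by apply: filterS H0 => w hw; exact: (fr (fun c => h c w) hw c).
set t := tperm c0 ord_max.
have rI := @perm_inj _ t.
rewrite (reindex_inj rI) /=.
have H0' : \forall w \near w0, \sum_c h (t c) w *: e (t c) = 0.
  by apply: filterS H0 => w; rewrite (reindex_inj rI).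
have rel' : \sum_c a (t c) *: e (t c) = 0 by move: rel; rewrite (reindex_inj rI).
have a0 : a (t ord_max) != 0 by rewrite tpermR.
rewrite (lin_elim rel' a0 (fun c => derive1 (h (t c)) w0)).
pose lam c := a (t (widen_ord (leqnSn N) c)) / a (t ord_max).
pose g c w := h (t (widen_ord (leqnSn N) c)) w - h (t ord_max) w * lam c.
have dg : forall c, derivable (g c) w0 1 /\ 'D_1 (g c) w0 =
   'D_1 (h (t (widen_ord (leqnSn N) c))) w0 - 'D_1 (h (t ord_max)) w0 * lam c.
  by move=> c; apply: dlin.
have := IH (fun c => e (t (widen_ord (leqnSn N) c))) g w0 (fun c => (dg c).1).
rewrite /=.
move=> IH'.
rewrite -[RHS]IH'.
  by apply: eq_bigr => c _; rewrite !derive1E (dg c).2.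
apply: filterS H0' => w hw.
by rewrite -[RHS]hw (lin_elim rel' a0 (fun c => h (t c) w)).
Qed.
End Uniq.

Lemma splitL m n (j : 'I_m) : fintype.split (lshift n j) = inl j.
Proof. exact: (@unsplitK _ _ (inl j)). Qed.
Lemma splitR m n (j : 'I_n) : fintype.split (rshift m j) = inr j.
Proof. exact: (@unsplitK _ _ (inr j)). Qed.

Section PU.
Variable R : realType.
Local Notation C := (Cplx R).
Variable n : nat.

Lemma pderiv_uniq (V : lmodType C) (U : set ('I_n -> C)) i (F G1 G2 : ('I_n -> C) -> V) :
  (forall z, U z -> \forall w \near z i, U (updz z i w)) ->
  is_pderiv U i F G1 -> is_pderiv U i F G2 -> forall z, U z -> G1 z = G2 z.
Proof.
move=> hU [N1 [f1 [b1 h1]]] [N2 [f2 [b2 h2]]] z Uz.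
have [d1 _ eG1] := h1 z Uz; have [d2 _ eG2] := h2 z Uz.
pose e (c : 'I_(N1 + N2)) : V := match fintype.split c with inl c1 => b1 c1 | inr c2 => - b2 c2 end.
pose h (c : 'I_(N1 + N2)) : C -> C := match fintype.split c with
  inl c1 => fun w => f1 c1 (updz z i w) | inr c2 => fun w => f2 c2 (updz z i w) end.
have := @uniq1 R V (N1 + N2) e h (z i).
rewrite big_split_ord /= /e /h.
under eq_bigr do rewrite splitL.
under [X in _ + X]eq_bigr do rewrite splitR.
move=> H.
have E : \sum_(c<N1) pderiv (f1 c) i z *: b1 c + \sum_(c<N2) pderiv (f2 c) i z *: - b2 c = 0.
  apply: H.
    by move=> c; case: fintype.split => c'; [exact: d1|exact: d2].
  apply: filterS (hU z Uz) => w Uw.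
  have [_ e1 _] := h1 _ Uw; have [_ e2 _] := h2 _ Uw.
  rewrite big_split_ord /=.
  under eq_bigr do rewrite splitL.
  under [X in _ + X]eq_bigr do rewrite splitR.
  under [X in _ + X]eq_bigr do rewrite scalerN.
  by rewrite sumrN -e1 -e2 subrr.
move: E; under [X in _ + X = _]eq_bigr do rewrite scalerN.
by rewrite sumrN -eG1 -eG2 => /eqP; rewrite subr_eq0 => /eqP.
Qed.
End PU.

Section UL.
Variable R : realType.
Local Notation C := (Cplx R).
Variables n m : nat.
Variable alpha : 'I_m -> C.

Definition Uset : set ('I_n -> C) :=
    fun z => (forall i p : 'I_n, i != p -> z i != z p) /\
             (forall (i : 'I_n) (k : 'I_m), z i != alpha k).

Lemma near_neq (x c : C) : x != c -> \forall w \near x, w != c.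
Proof.
move=> xc; apply/nbhs_ballP; exists `|x - c|; first by rewrite /= normr_gt0 subr_eq0.
move=> y hy; apply/eqP => yc; move: hy; rewrite yc /ball /= ltxx //.
Qed.

Arguments near_neq {x c}.

Lemma Uline z i : Uset z -> \forall w \near z i, Uset (updz z i w).
Proof.
case=> Hz Ha.
have H1 : \forall w \near z i, forall p : 'I_n, p != i -> w != z p.
  have fa : forall p : 'I_n, \forall w \near z i, p != i -> w != z p.
    move=> p; case: (eqVneq p i) => [?|pi].
      by apply: filterS filterT => w.
    have ip : i != p by rewrite eq_sym.
    by apply: filterS (near_neq (Hz i p ip)) => w wn _.
  exact: (@filter_forall _ _ _ _ _ fa).
have H2 : \forall w \near z i, forall k, w != alpha k.
  have fa : forall k, \forall w \near z i, w != alpha k.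
    by move=> k; exact: near_neq (Ha i k).
  exact: (@filter_forall _ _ _ _ _ fa).
apply: filterS (filterI H1 H2) => w [w1 w2]; split.
  move=> a b ab; rewrite /updz.
  case: (eqVneq a i) => [ai|ai]; case: (eqVneq b i) => [bi|bi].
  - by rewrite ai bi eqxx in ab.
  - exact: w1.
  - by rewrite eq_sym; exact: w1.
  - exact: Hz.
by move=> a k; rewrite /updz; case: (eqVneq a i) => _; [exact: w2 | exact: Ha].
Qed.
End UL.
Arguments Uset {R n m}.
Arguments Uline {R n m alpha}.

Section Rep.
Variable R : realType.
Local Notation C := (Cplx R).
Variables (B : algType C) (n m : nat) (nu : B) (sigma : {perm 'I_n} -> B)
  (Y : 'I_n -> 'I_m -> B) (alpha : 'I_m -> C).

Definition AconD (i : 'I_n) (z : 'I_n -> C) : B :=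
    \sum_(k < m) (z i - alpha k)^-1 *: Y i k
    - \sum_(p < n | p != i) (z i - z p)^-1 *: (nu * sigma (tperm i p)).

Definition fA (j : 'I_n) (c : 'I_(m + n)) (z : 'I_n -> C) : C :=
  match fintype.split c with
  | inl k => (z j - alpha k)^-1
  | inr p => if p != j then (z j - z p)^-1 else 0 end.
Definition bA (j : 'I_n) (c : 'I_(m + n)) : B :=
  match fintype.split c with
  | inl k => Y j k
  | inr p => - (nu * sigma (tperm j p)) end.

Lemma Acon_rep j z : AconD j z = \sum_c fA j c z *: bA j c.
Proof.
rewrite /AconD big_split_ord /= /fA /bA.
under [X in _ = X + _]eq_bigr do rewrite splitL.
under [X in _ = _ + X]eq_bigr do rewrite splitR.
rewrite -sumrN /=; congr (_ + _); rewrite big_mkcond; apply: eq_bigr => p _.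
by case: ifP => _; rewrite ?scalerN ?scale0r ?oppr0.
Qed.

Lemma upd_der (z : 'I_n -> C) i p x : derivable (fun w => updz z i w p) x 1.
Proof.
rewrite /updz; case: (p == i).
  exact: (@derivable_id C C x 1).
exact: (@derivable_cst C C C (z p) x 1).
Qed.

Lemma updzz (z : 'I_n -> C) i p : updz z i (z i) p = z p.
Proof. by rewrite /updz; case: eqVneq => // ->. Qed.

Lemma inv_der (g h : C -> C) x : derivable g x 1 -> derivable h x 1 ->
  g x - h x != 0 -> derivable (fun w => (g w - h w)^-1) x 1.
Proof.
move=> dg dh nz.
exact: (@derivableV C C (g - h) x 1 nz (@derivableB C C C g h x 1 dg dh)).
Qed.

Lemma fA_der j c z i : Uset alpha z -> pderivable (fA j c) i z.
Proof.
case=> Hz Ha; rewrite /pderivable /fA; case: fintype.split => [k|p].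
  apply: inv_der; [exact: upd_der | exact: (@derivable_cst C C C _ _ 1)|].
  by rewrite updzz subr_eq0 Ha.
case: (eqVneq p j) => pj /=.
  exact: (@derivable_cst C C C 0 _ 1).
apply: inv_der; [exact: upd_der | exact: upd_der|].
by rewrite !updzz subr_eq0 Hz // eq_sym.
Qed.

Lemma dinv (c x : C) : c - x != 0 ->
  derive1 (fun w => (c - w)^-1) x = (c - x) ^- 2.
Proof.
move=> nz.
have d : derivable (cst c - id) x 1 :=
  @derivableB C C C (cst c) id x 1 (@derivable_cst C C C c x 1) (@derivable_id C C x 1).
rewrite derive1E.
have -> : (fun w => (c - w)^-1) = (fun y => ((cst c - id) y)^-1) by [].
rewrite (@deriveV C C (cst c - id) x 1 nz d).
rewrite (@deriveB C C C (cst c) id x 1 (@derivable_cst C C C c x 1) (@derivable_id C C x 1)).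
rewrite (@derive_cst C C C c x 1) (@derive_id C C x 1) sub0r scalerN scaleNr opprK.
by rewrite /GRing.scale /= mulr1.
Qed.

Lemma Dstd i j z : i != j -> Uset alpha z ->
  \sum_c pderiv (fA j c) i z *: bA j c = (z j - z i) ^- 2 *: - (nu * sigma (tperm j i)).
Proof.
move=> ij [Hz Ha]; have ji : j != i by rewrite eq_sym.
rewrite big_split_ord /= big1 ?add0r; last first.
  move=> k _; rewrite /pderiv.
  have -> : (fun w => fA j (lshift n k) (updz z i w)) = cst ((z j - alpha k)^-1).
    by apply/funext => w; rewrite /fA splitL /updz (negbTE ji).
  by rewrite (@derive1_cst C C) scale0r.
rewrite (bigD1 i) //= big1 ?addr0.
  rewrite /pderiv.
  have -> : (fun w => fA j (rshift m i) (updz z i w)) = (fun w => (z j - w)^-1).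
    by apply/funext => w; rewrite /fA splitR ij /updz eqxx (negbTE ji).
  by rewrite (dinv (z j) (z i)) ?subr_eq0 ?Hz // /bA splitR.
move=> p pi; rewrite /pderiv.
have -> : (fun w => fA j (rshift m p) (updz z i w)) =
    cst (if p != j then (z j - z p)^-1 else 0).
  by apply/funext => w; rewrite /fA splitR /updz (negbTE ji) (negbTE pi).
by rewrite (@derive1_cst C C) scale0r.
Qed.

End Rep.

Arguments AconD {R B n m}.
Arguments fA {R n m}.
Arguments bA {R B n m}.
Arguments fA_der {R n m alpha j c z i}.
Arguments Acon_rep {R B n m}.
Arguments pderiv_uniq {R n V U i F G1 G2}.
Arguments Dstd {R B n m} nu sigma Y {alpha i j z}.

Theorem lemma4p1 (R : realType) (B : algType (Cplx R)) (n m : nat)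
  (d : 'I_m -> nat) (gamma : forall k : 'I_m, 'I_(d k) -> B) (nu : B)
  (sigma : {perm 'I_n} -> B) (Y : 'I_n -> 'I_m -> B) (alpha : 'I_m -> Cplx R) :
  (forall k, (0 < d k)%N) ->
  (* nu and the gamma_kj are central (they are the scalars of C[gamma,nu]) *)
  (forall x : B, nu * x = x * nu) ->
  (forall k j (x : B), gamma k j * x = x * gamma k j) ->
  (* S_n maps into B multiplicatively *)
  sigma 1%g = 1 ->
  (forall p q : {perm 'I_n}, sigma (p * q)%g = sigma p * sigma q) ->
  (* defining relations of B_n, with s_ij = sigma (tperm i j) *)
  (forall (i j : 'I_n) k, i != j ->
     sigma (tperm i j) * Y i k = Y j k * sigma (tperm i j)) ->
  (forall (i j h : 'I_n) k, i != j -> h != i -> h != j ->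
     sigma (tperm i j) * Y h k = Y h k * sigma (tperm i j)) ->
  (forall (i : 'I_n) (k : 'I_m), \prod_(j < d k) (Y i k - gamma k j) = 0) ->
  (forall i : 'I_n,
     \sum_(k < m) Y i k = nu * \sum_(j < n | j != i) sigma (tperm i j)) ->
  (forall (i j : 'I_n) k, i != j ->
     Y i k * Y j k - Y j k * Y i k = nu * (Y i k - Y j k) * sigma (tperm i j)) ->
  (forall (i j : 'I_n) (k l : 'I_m), i != j -> k != l ->
     Y i k * Y j l = Y j l * Y i k) ->
  (* distinct alpha_k *)
  injective alpha ->
  let Acon (i : 'I_n) (z : 'I_n -> Cplx R) : B :=
    \sum_(k < m) (z i - alpha k)^-1 *: Y i k
    - \sum_(p < n | p != i) (z i - z p)^-1 *: (nu * sigma (tperm i p)) in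
  let U : set ('I_n -> Cplx R) :=
    fun z => (forall i p : 'I_n, i != p -> z i != z p) /\
             (forall (i : 'I_n) (k : 'I_m), z i != alpha k) in
  forall i j : 'I_n,
    (exists D : ('I_n -> Cplx R) -> B, is_pderiv U i (Acon j) D) /\
    (forall Dij Dji : ('I_n -> Cplx R) -> B,
       is_pderiv U i (Acon j) Dij -> is_pderiv U j (Acon i) Dji ->
       forall z, U z ->
         Dij z - Dji z + (Acon i z * Acon j z - Acon j z * Acon i z) = 0).
Proof.
move=> dpos nuC gC sig1 sigM H1 H2 Hprod Hsum H3 H4 ainj Acon U i j.
have hU : forall i z, U z -> \forall w \near z i, U (updz z i w).
  by move=> i' z Uz; exact: (Uline z i' Uz).
have rep : forall i j, is_pderiv U i (Acon j)
    (fun z => \sum_c pderiv (fA alpha j c) i z *: bA nu sigma Y j c).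
  move=> i' j'; exists (m + n), (fA alpha j'), (bA nu sigma Y j') => z Uz.
  split => //.
    by move=> c; exact: fA_der.
  exact: Acon_rep.
split; first by eexists; exact: rep.
move=> Dij Dji hij hji z Uz.
rewrite (pderiv_uniq (hU i) hij (rep i j) z Uz) (pderiv_uniq (hU j) hji (rep j i) z Uz).
case: (eqVneq i j) => [<-|ij]; first by rewrite !subrr addr0.
have ji : j != i by rewrite eq_sym.
rewrite (Dstd nu sigma Y ij Uz) (Dstd nu sigma Y ji Uz) (tpermC j i).
have -> : (z j - z i) ^- 2 = (z i - z j) ^- 2 by rewrite -opprB sqrrN.
rewrite subrr add0r.
case: Uz => Hz Ha.
exact: (@commA R B n m nu sigma Y nuC sigM H1 H2 H3 H4 z alpha Hz Ha i j ij).
Qed.
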